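(* Let $A\in\mathbb{R}^{r\times n}$, let $f:\mathbb{R}^r\to\mathbb{R}$ be convex, and let $\mathcal{X}\subseteq\mathbb{R}^n$ be any set such that the problem $\max\{f(Ax): x\in\mathcal{X}\}$ has a nonempty set of global optimizers. Then there exists $c\in\mathbb{R}^r$ such that the linear problem $\max_{x\in\mathcal{X}} c^\top Ax$ admits an optimal solution, and every optimal solution of this linear problem is also an optimal solution of $\max\{f(Ax): x\in\mathcal{X}\}$. *)

(* Defs.v *)
From mathcomp Require Import all_boot all_order all_algebra.
From mathcomp Require Import reals.
Set Implicit Arguments. Unset Strict Implicit. Unset Printing Implicit Defensive.
Import Order.TTheory GRing.Theory Num.Theory.
Local Open Scope ring_scope.

Definition convex_fun (R : realType) (r : nat) (f : 'cV[R]_r -> R) : Prop :=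
  forall (x y : 'cV[R]_r) (t : R), 0 <= t -> t <= 1 ->
    f (t *: x + (1 - t) *: y) <= t * f x + (1 - t) * f y.

Definition is_maximizer (R : realType) (n : nat) (X : 'cV[R]_n -> Prop)
  (g : 'cV[R]_n -> R) (x : 'cV[R]_n) : Prop :=
  X x /\ forall y, X y -> g y <= g x.

Definition lin_obj (R : realType) (r n : nat) (c : 'cV[R]_r) (A : 'M[R]_(r, n))
  (x : 'cV[R]_n) : R := (c^T *m A *m x) 0 0.

(* Main.v *)
Require Import Defs.
From mathcomp Require Import all_boot all_order all_algebra.
From mathcomp Require Import classical_sets reals.
From mathcomp Require Import ring lra.
Import Order.TTheory GRing.Theory Num.Theory.
Local Open Scope ring_scope.
Local Open Scope classical_set_scope.
Set Implicit Arguments. Unset Strict Implicit.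

Definition dot (R : realType) r (c d : 'cV[R]_r) : R := (c^T *m d) 0 0.

Lemma dotD (R : realType) r (c u v : 'cV[R]_r) : dot c (u + v) = dot c u + dot c v.
Proof. by rewrite /dot mulmxDr mxE. Qed.
Lemma dotZ (R : realType) r (c u : 'cV[R]_r) a : dot c (a *: u) = a * dot c u.
Proof. by rewrite /dot -scalemxAr mxE. Qed.
Lemma dotDl (R : realType) r (c c' u : 'cV[R]_r) : dot (c + c') u = dot c u + dot c' u.
Proof. by rewrite /dot linearD /= mulmxDl mxE. Qed.
Lemma dotZl (R : realType) r (c u : 'cV[R]_r) a : dot (a *: c) u = a * dot c u.
Proof. by rewrite /dot linearZ /= -scalemxAl mxE. Qed.
Lemma dotN (R : realType) r (c u v : 'cV[R]_r) : dot c (u - v) = dot c u - dot c v.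
Proof. by rewrite dotD -scaleN1r dotZ; ring. Qed.
Lemma dot_delta (R : realType) r (i : 'I_r) (d : 'cV[R]_r) :
  dot (delta_mx i 0) d = d i 0.
Proof. by rewrite /dot trmx_delta -rowE mxE. Qed.
Lemma dot0 (R : realType) r (c : 'cV[R]_r) : dot c 0 = 0.
Proof. by rewrite /dot mulmx0 mxE. Qed.
Section Key.
Variables (R : realType) (r : nat) (g : 'cV[R]_r -> R) (c e : 'cV[R]_r).
Hypothesis gconv : convex_fun g.
Variable P : 'cV[R]_r -> Prop.
Hypothesis PZ : forall u u' a b, P u -> P u' -> P (a *: u + b *: u').
Hypothesis IH : forall d, P d -> dot c d <= g d.

Lemma key u u' s t : P u -> P u' -> 0 < s -> 0 < t ->
  (dot c u - g (u - s *: e)) / s <= (g (u' + t *: e) - dot c u') / t.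
Proof.
move=> Pu Pu' s0 t0.
have m0 : 0 < s + t by lra.
set q := t / (s + t).
have q0 : 0 <= q by rewrite /q divr_ge0 // ltW.
have q1 : q <= 1 by rewrite /q ler_pdivrMr // mul1r; lra.
have hw : q *: (u - s *: e) + (1 - q) *: (u' + t *: e) = q *: u + (s / (s+t)) *: u'.
  apply/matrixP => i j; rewrite !mxE /q; field; lra.
have := gconv (u - s *: e) (u' + t *: e) q0 q1.
rewrite hw => H1.
have H2 := IH (PZ q (s / (s + t)) Pu Pu').
rewrite dotD !dotZ in H2.
have H3 : q * dot c u + s / (s + t) * dot c u' <= q * g (u - s *: e) + (1 - q) * g (u' + t *: e) by lra.
have e1 : 1 - q = s / (s + t) by rewrite /q; field; lra.
rewrite e1 /q in H3.
have H4 : t * dot c u + s * dot c u' <= t * g (u - s *: e) + s * g (u' + t *: e).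
  have := ler_pM2l m0; move=> <-.
  have -> : (s + t) * (t * dot c u + s * dot c u') = (s+t)*(t / (s + t) * dot c u + s / (s + t) * dot c u') * (s + t) by field; lra.
  have -> : (s + t) * (t * g (u - s *: e) + s * g (u' + t *: e)) = (s+t)*(t / (s + t) * g (u - s *: e) + s / (s + t) * g (u' + t *: e)) * (s+t) by field; lra.
  rewrite ler_pM2r // ler_pM2l //.
rewrite ler_pdivrMr // mulrAC ler_pdivlMr //; lra.
Qed.
End Key.
Lemma subgrad_k (R : realType) (r : nat) (g : 'cV[R]_r -> R) :
  convex_fun g -> g 0 = 0 -> forall k, (k <= r)%N ->
  exists c : 'cV[R]_r, forall d : 'cV[R]_r,
    (forall i : 'I_r, (k <= i)%N -> d i 0 = 0) -> dot c d <= g d.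
Proof.
move=> gconv g0; elim=> [|k IHk] kr.
  exists 0 => d Hd.
  have -> : d = 0 by apply/matrixP => i j; rewrite (ord1 j) mxE Hd.
  by rewrite dot0 g0.
have [c Hc] := IHk (ltnW kr).
pose ko := Ordinal kr.
pose e : 'cV[R]_r := delta_mx ko 0.
pose P := fun u : 'cV[R]_r => forall i : 'I_r, (k <= i)%N -> u i 0 = 0.
have PZ : forall u u' a b, P u -> P u' -> P (a *: u + b *: u').
  by move=> u u' a b Pu Pu' i ki; rewrite !mxE Pu // Pu' // !mulr0 addr0.
pose L := [set x : R | exists u s, [/\ P u, 0 < s & x = (dot c u - g (u - s *: e)) / s]].
have Lne : L !=set0.
  exists ((dot c 0 - g (0 - 1 *: e)) / 1); exists 0, 1; split => //.
  by move=> i _; rewrite mxE.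
have ub : forall u' t, P u' -> 0 < t -> ubound L ((g (u' + t *: e) - dot c u') / t).
  move=> u' t Pu' t0 x [u [s [Pu s0 ->]]].
  exact: (@key R r g c e gconv P PZ Hc u u' s t Pu Pu' s0 t0).
have Lsup : has_sup L.
  split => //; exists ((g (0 + 1 *: e) - dot c 0) / 1).
  by apply: ub => // i _; rewrite mxE.
pose a := sup L.
exists (c + (a - dot c e) *: e) => d Pd.
pose t := d ko 0.
pose u := d - t *: e.
have Pu : P u.
  move=> i ki; rewrite /u !mxE.
  case: (eqVneq i ko) => [->|ne].
    by rewrite !eqxx mulr1 subrr.
  have kli : (k < i)%N.
    by rewrite ltn_neqAle ki andbT; apply: contra ne => /eqP h; apply/eqP/val_inj.
  by rewrite Pd //= mulr0 subr0.
have dE : d = u + t *: e by rewrite /u subrK.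
have dotE : dot (c + (a - dot c e) *: e) d = dot c u + t * a.
  rewrite dotDl dotZl dot_delta -/t {1}dE dotD dotZ; ring.
rewrite dotE.
have [t0|tgt0|teq] := ltgtP t 0.
- have s0 : 0 < - t by lra.
  have inL : L ((dot c u - g (u - (- t) *: e)) / (- t)).
    by exists u, (- t).
  have := sup_upper_bound Lsup inL; rewrite -/a scaleNr opprK -dE.
  rewrite ler_pdivrMr // => h; lra.
- have := ge_sup Lne (ub u t Pu tgt0); rewrite -/a -dE.
  rewrite ler_pdivlMr // => h; lra.
- have -> : d = u by rewrite dE teq scale0r addr0.
  by rewrite teq mul0r addr0; apply: Hc.
Qed.

Lemma subgrad (R : realType) (r : nat) (g : 'cV[R]_r -> R) :
  convex_fun g -> g 0 = 0 -> exists c : 'cV[R]_r, forall d, dot c d <= g d.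
Proof.
move=> gc g0; have [c Hc] := subgrad_k gc g0 (leqnn r).
by exists c => d; apply: Hc => i ri; move: (ltn_ord i); rewrite ltnNge ri.
Qed.

Theorem proposition5 (R : realType) (r n : nat) (A : 'M[R]_(r, n))
  (f : 'cV[R]_r -> R) (X : 'cV[R]_n -> Prop) :
  convex_fun f ->
  (exists x, is_maximizer X (fun z => f (A *m z)) x) ->
  exists c : 'cV[R]_r,
    (exists x, is_maximizer X (lin_obj c A) x) /\
    (forall x, is_maximizer X (lin_obj c A) x ->
               is_maximizer X (fun z => f (A *m z)) x).
Proof.
move=> fc [xs [Xxs Hxs]].
pose ys := A *m xs.
pose g := fun d => f (ys + d) - f ys.
have gc : convex_fun g.
  move=> x y t t0 t1; rewrite /g.
  have -> : ys + (t *: x + (1 - t) *: y) = t *: (ys + x) + (1 - t) *: (ys + y).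
    by apply/matrixP => i j; rewrite !mxE; ring.
  have := fc (ys + x) (ys + y) t t0 t1; lra.
have g0 : g 0 = 0 by rewrite /g addr0 subrr.
have [c Hc] := subgrad gc g0.
have linE : forall x, lin_obj c A x = dot c (A *m x).
  by move=> x; rewrite /lin_obj /dot mulmxA.
have gE : forall x, g (A *m x - ys) = f (A *m x) - f ys.
  by move=> x; rewrite /g (addrC ys) subrK.
exists c; split.
  exists xs; split => // y Xy; rewrite !linE.
  have := Hc (A *m y - ys); rewrite gE dotN.
  have := Hxs y Xy; rewrite /= -/ys; lra.
move=> x [Xx Hx]; split => // y Xy /=.
have := Hx xs Xxs; rewrite !linE -/ys => h1.
have := Hc (A *m x - ys); rewrite gE dotN => h2.
have := Hxs y Xy; rewrite /= -/ys; lra.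
Qed.
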